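(* In the $1/4$-rebate Marshallian Match, the truthful strategy profile, in which every bidder $i$ bids $b_{ij}(t)=v_{ij}$ on every asker $j$ and every asker $j$ asks $a_{ji}(t)=c_{ji}$ on every bidder $i$ at all times, is $4$-ex post stable.
   Context: Bipartite setting: bidders $i$ and askers $j$; bidder $i$ has value $v_{ij}\in\mathbb R$ for matching asker $j$ and asker $j$ has cost $c_{ji}\in\mathbb R$ for matching bidder $i$; surplus $s_{ij}=v_{ij}-c_{ji}$. $1/4$-rebate Marshallian Match: a global price $p(t)$ decreases continuously with $p(0)=+\infty$, $p(1)=0$. Each unmatched bidder $i$ maintains a bid $b_{ij}(t)\in\mathbb R$ on each feasible asker $j$, and each unmatched asker $j$ an ask $a_{ji}(t)\in\mathbb R$ on each feasible bidder $i$. As soon as an unmatched pair satisfies $b_{ij}(t)-a_{ji}(t)\ge p(t)$, they are matched and leave; the bidder pays $b_{ij}$, the asker receives $a_{ji}$, and each receives a rebate of $(b_{ij}-a_{ji})/4$. So the bidder's utility is $v_{ij}-b_{ij}+(b_{ij}-a_{ji})/4$ and the asker's is $a_{ji}-c_{ji}+(b_{ij}-a_{ji})/4$; unmatched agents get utility $0$. $k$-ex post stability: a profile $(b,a)$ is $k$-ex post stable if for every realization of types and every feasible bidder–asker pair $(i,j)$, $u_i(b,a)+u_j(b,a)\ge \frac1k s_{ij}$. *)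

(* Defs.v *)
From Stdlib Require Import Reals Lra.
Open Scope R_scope.

(* Time runs over (0,1].  The global price p(t) is modelled on (0,1]:
   p(0) = +oo is expressed as "p t -> +oo as t -> 0+". *)
Definition price_path (p : R -> R) : Prop :=
  (forall t, 0 < t <= 1 ->
     forall eps, 0 < eps -> exists delta, 0 < delta /\
       forall s, 0 < s <= 1 -> Rabs (s - t) < delta -> Rabs (p s - p t) < eps) /\
  (forall s t, 0 < s <= 1 -> 0 < t <= 1 -> s < t -> p t < p s) /\
  (forall M, exists delta, 0 < delta /\ forall t, 0 < t < delta -> M < p t) /\
  p 1 = 0.

Definition bids (I J : Type) := I -> J -> R -> R.
Definition asks (I J : Type) := J -> I -> R -> R.

(* A (possible) run outcome of the Marshallian Match:
   mI i = Some (j, tau) : bidder i is matched to asker j at time tau;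
   mJ j = Some (i, tau) : symmetric record for askers; None = unmatched.
   Ties between simultaneously eligible pairs may be broken arbitrarily,
   so any outcome satisfying these rules is a possible run. *)
Definition mm_outcome {I J : Type} (E : I -> J -> Prop) (p : R -> R)
  (b : bids I J) (a : asks I J)
  (mI : I -> option (J * R)) (mJ : J -> option (I * R)) : Prop :=
  (forall i j tau, mI i = Some (j, tau) <-> mJ j = Some (i, tau)) /\
  (forall i j tau, mI i = Some (j, tau) ->
     E i j /\ 0 < tau <= 1 /\ b i j tau - a j i tau >= p tau) /\
  (* "as soon as": whenever a feasible pair's spread reaches the price at
     time t, at least one of the two has left (been matched) by time t *)
  (forall i j t, E i j -> 0 < t <= 1 -> b i j t - a j i t >= p t ->
     (exists j' tau, mI i = Some (j', tau) /\ tau <= t) \/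
     (exists i' tau, mJ j = Some (i', tau) /\ tau <= t)).

Definition bidder_util {I J : Type} (v : I -> J -> R) (b : bids I J) (a : asks I J)
  (mI : I -> option (J * R)) (i : I) : R :=
  match mI i with
  | Some (j, tau) => v i j - b i j tau + (b i j tau - a j i tau) / 4
  | None => 0
  end.

Definition asker_util {I J : Type} (c : J -> I -> R) (b : bids I J) (a : asks I J)
  (mJ : J -> option (I * R)) (j : J) : R :=
  match mJ j with
  | Some (i, tau) => a j i tau - c j i + (b i j tau - a j i tau) / 4
  | None => 0
  end.

Definition bid_profile (I J : Type) := (I -> J -> R) -> (J -> I -> R) -> bids I J.
Definition ask_profile (I J : Type) := (I -> J -> R) -> (J -> I -> R) -> asks I J.

Definition truthful_bids {I J : Type} : bid_profile I J := fun v c i j t => v i j.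
Definition truthful_asks {I J : Type} : ask_profile I J := fun v c j i t => c j i.

Definition ex_post_stable {I J : Type} (E : I -> J -> Prop) (k : R)
  (sb : bid_profile I J) (sa : ask_profile I J) : Prop :=
  forall (p : R -> R) (v : I -> J -> R) (c : J -> I -> R)
         (mI : I -> option (J * R)) (mJ : J -> option (I * R)),
    price_path p ->
    mm_outcome E p (sb v c) (sa v c) mI mJ ->
    forall i j, E i j ->
      bidder_util v (sb v c) (sa v c) mI i + asker_util c (sb v c) (sa v c) mJ j
        >= (v i j - c j i) / k.

(* Main.v *)
Require Import Defs.
From Stdlib Require Import Reals Lra.
Open Scope R_scope.

Lemma p_nonneg p : price_path p -> forall t, 0 < t <= 1 -> 0 <= p t.
Proof.
  intros [_ [Hd [_ H1]]] t Ht.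
  destruct (Req_dec t 1) as [->|Hn]; [lra|].
  assert (p 1 < p t) by (apply Hd; lra). lra.
Qed.

Lemma earlier p s m : price_path p -> 0 < m <= 1 -> p m < s ->
  exists t, 0 < t < m /\ p t < s.
Proof.
  intros [Hc _] Hm Hlt.
  destruct (Hc m Hm (s - p m)) as [d [Hd Hs]]; [lra|].
  set (t := Rmax (m/2) (m - d/2)).
  assert (m/2 <= t) by apply Rmax_l.
  assert (m - d/2 <= t) by apply Rmax_r.
  assert (t < m) by (unfold t; apply Rmax_lub_lt; lra).
  exists t. split; [lra|].
  assert (Rabs (p t - p m) < s - p m) by (apply Hs; [lra| rewrite Rabs_left; lra]).
  apply Rabs_def2 in H2. lra.
Qed.

Theorem mainTheorem11 (I J : Type) (E : I -> J -> Prop) :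
  ex_post_stable E 4 (@truthful_bids I J) (@truthful_asks I J).
Proof.
  intros p v c mI mJ Hp [Hcons [Hmatch Hsoon]] i j Hij.
  unfold bidder_util, asker_util, truthful_bids, truthful_asks.
  pose proof (p_nonneg p Hp) as Hnn.
  assert (Hsoon' : forall t, 0 < t <= 1 -> v i j - c j i >= p t ->
     (exists j' tau, mI i = Some (j', tau) /\ tau <= t) \/
     (exists i' tau, mJ j = Some (i', tau) /\ tau <= t)) by (intros; apply Hsoon; auto).
  assert (Hearly : forall m, 0 < m <= 1 -> p m < v i j - c j i ->
     (forall j' tau, mI i = Some (j', tau) -> m <= tau) ->
     (forall i' tau, mJ j = Some (i', tau) -> m <= tau) -> False).
  { intros m Hm Hl Hi Hj. destruct (earlier p _ m Hp Hm Hl) as [t [Ht Hpt]].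
    destruct (Hsoon' t ltac:(lra) ltac:(lra)) as [[j' [tau [Heq Hle]]]|[i' [tau [Heq Hle]]]].
    - specialize (Hi _ _ Heq). lra.
    - specialize (Hj _ _ Heq). lra. }
  destruct (mI i) as [[j1 t1]|] eqn:Ei; destruct (mJ j) as [[i2 t2]|] eqn:Ej.
  - destruct (Hmatch i j1 t1 Ei) as [_ [H1 S1]]. unfold truthful_bids, truthful_asks in S1.
    destruct (Hmatch i2 j t2 (proj2 (Hcons _ _ _) Ej)) as [_ [H2 S2]]. unfold truthful_bids, truthful_asks in S2.
    pose proof (Hnn t1 H1). pose proof (Hnn t2 H2).
    destruct (Rle_lt_dec t1 t2).
    + destruct (Rlt_le_dec (p t1) (v i j - c j i)); [|lra].
      exfalso; apply (Hearly t1 H1 r0).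
      * intros j' tau E'. inversion E'; lra.
      * intros i' tau E'. inversion E'; lra.
    + destruct (Rlt_le_dec (p t2) (v i j - c j i)); [|lra].
      exfalso; apply (Hearly t2 H2 r0).
      * intros j' tau E'. inversion E'; lra.
      * intros i' tau E'. inversion E'; lra.
  - destruct (Hmatch i j1 t1 Ei) as [_ [H1 S1]]. unfold truthful_bids, truthful_asks in S1.
    pose proof (Hnn t1 H1).
    destruct (Rlt_le_dec (p t1) (v i j - c j i)); [|lra].
    exfalso; apply (Hearly t1 H1 r).
    * intros j' tau E'. inversion E'; lra.
    * intros i' tau E'. discriminate.
  - destruct (Hmatch i2 j t2 (proj2 (Hcons _ _ _) Ej)) as [_ [H2 S2]]. unfold truthful_bids, truthful_asks in S2.
    pose proof (Hnn t2 H2).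
    destruct (Rlt_le_dec (p t2) (v i j - c j i)); [|lra].
    exfalso; apply (Hearly t2 H2 r).
    * intros j' tau E'. discriminate.
    * intros i' tau E'. inversion E'; lra.
  - destruct Hp as [Hc [Hd [Hi Hp1]]].
    destruct (Rle_lt_dec (v i j - c j i) 0); [lra|].
    destruct (Hsoon' 1 ltac:(lra) ltac:(lra)) as [[j' [tau [Heq _]]]|[i' [tau [Heq _]]]]; discriminate.
Qed.
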